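(* Let $p>0$, $M$ a positive integer and $Y\in\Upsilon^m_p\cap(\mathbb{C}^{M\times M})^m$. Then: (i) The map $X\mapsto K_p(X,Y)$, defined on $\Upsilon^m_p$ with values in $\coprod_N\mathbb{C}^{N\times N}\otimes\mathbb{C}^{M\times M}$, is a noncommutative function that belongs to $\overline{H^2_{m,p}}\otimes\mathbb{C}^{M\times M}$; that is, for all $e_1,e_2\in\mathbb{C}^M$ the function $e_1^\ast K_p(\cdot,Y)e_2: X\mapsto\sum_{w\in\mathcal{F}_m}p^{|w|}\,(e_1^\ast(Y^w)^\ast e_2)\,X^w$ belongs to $\overline{H^2_{m,p}}$. (ii) For all $e_1,e_2\in\mathbb{C}^M$ and all $f\in\overline{H^2_{m,p}}$, \[ \langle f,\,e_1^\ast K_p(\cdot,Y)e_2\rangle_{\ell^2_p(\mathcal{F}_m)}=e_2^\ast f(Y)e_1. \]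
   Context: $\mathcal{F}_m$ is the free monoid on $\{1,\dots,m\}$, $\mathcal{F}_m^{[l]}$ the words of length $l$; for $X\in(\mathbb{C}^{N\times N})^m$, $X^w=X_{w_1}\cdots X_{w_t}$, $X^\emptyset=I_N$. For $p>0$, $\ell^2_p(\mathcal{F}_m)$ is the Hilbert space of complex sequences $\{f_w\}$ with $\sum_wp^{-|w|}|f_w|^2<\infty$, with inner product $\langle\{f_w\},\{g_w\}\rangle=\sum_wp^{-|w|}f_w\overline{g_w}$. $\Upsilon^m_p$ is the set of $X\in\coprod_N(\mathbb{C}^{N\times N})^m$ such that $\sum_{w\in\mathcal{F}_m}p^{|w|}(X^w)^\ast X^w$ converges. For $X,Y\in\Upsilon^m_p$ (with $X$ of size $N$, $Y$ of size $M$), $K_p(X,Y)=\sum_{l=0}^\infty\sum_{w\in\mathcal{F}_m^{[l]}}p^l\,X^w\otimes(Y^w)^\ast\in\mathbb{C}^{N\times N}\otimes\mathbb{C}^{M\times M}$ (the series converges). $\overline{H^2_{m,p}}$ is the space of noncommutative functions $f:\Upsilon^m_p\to\coprod_N\mathbb{C}^{N\times N}$ (mapping level $N$ to $\mathbb{C}^{N\times N}$, respecting direct sums and similarities) for which there is $\{f_w\}\in\ell^2_p(\mathcal{F}_m)$ with $f(X)=\sum_{l=0}^\infty\sum_{w\in\mathcal{F}_m^{[l]}}f_wX^w$ for all $X\in\Upsilon^m_p$; it is a Hilbert space with the inner product of $\ell^2_p(\mathcal{F}_m)$ applied to the coefficient sequences. For $e_1,e_2\in\mathbb{C}^M$ and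 a function $F$ with values in $\mathbb{C}^{N\times N}\otimes\mathbb{C}^{M\times M}$, $e_1^\ast Fe_2$ denotes $(I_N\otimes e_1^\ast)F(I_N\otimes e_2)$. *)

(* Defs.v *)
From HB Require Import structures.
From mathcomp Require Import all_boot all_order all_algebra.
From mathcomp Require Import all_classical all_reals all_analysis.
From mathcomp Require Export complex mxtens.
Import Order.TTheory GRing.Theory Num.Theory.
Import numFieldNormedType.Exports.

Set Implicit Arguments.
Unset Strict Implicit.
Unset Printing Implicit Defensive.

Local Open Scope ring_scope.
Local Open Scope classical_set_scope.

(* The complex numbers R[i] (R : realType) get their canonical normed
   (hence topological) structure as a numClosedFieldType, exactly as
   MathComp-Analysis does for an abstract numClosedFieldType. *)
HB.instance Definition _ (R : rcfType) := GRing.ComAlgebra.copy R[i] (R[i])^o.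
HB.instance Definition _ (R : rcfType) := Vector.copy R[i] (R[i])^o.
HB.instance Definition _ (R : rcfType) := NormedModule.copy R[i] (R[i])^o.

Section Defs.
Variables (R : realType) (m : nat).
Local Notation C := R[i].
(* words of the free monoid F_m on {0,..,m-1} are  seq 'I_m ; |w| = size w *)

Definition rC (x : R) : C := Complex x 0.

Definition mxadj (a b : nat) (A : 'M[C]_(a, b)) : 'M[C]_(b, a) :=
  (map_mx Num.conj A)^T.

Definition wpow (N : nat) (X : 'I_m -> 'M[C]_N) (w : seq 'I_m) : 'M[C]_N :=
  foldr (fun i A => X i *m A) 1%:M w.

Definition lsum (V : zmodType) (l : nat) (F : seq 'I_m -> V) : V :=
  \sum_(w : l.-tuple 'I_m) F (tval w).

Definition psum (V : zmodType) (F : seq 'I_m -> V) (L : nat) : V :=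
  \sum_(l < L) lsum l F.

Definition Upsilon (p : R) (N : nat) (X : 'I_m -> 'M[C]_N) : Prop :=
  exists S : 'M[C]_N,
    psum (fun w => rC (p ^+ size w) *: (mxadj (wpow X w) *m wpow X w)) @ \oo --> S.

Definition ell2 (p : R) (f : seq 'I_m -> C) : Prop :=
  exists s : C, psum (fun w => rC (p ^- size w) * `|f w| ^+ 2) @ \oo --> s.

(* <{f_w},{g_w}>_{l^2_p} = v  (the defining series converges to v) *)
Definition ip_to (p : R) (f g : seq 'I_m -> C) (v : C) : Prop :=
  psum (fun w => rC (p ^- size w) * f w * Num.conj (g w)) @ \oo --> v.

(* functions defined on coprod_N (C^{NxN})^m with values in coprod_N C^{NxN}
   (only their values on Upsilon^m_p matter) *)
Definition ncmap := forall N : nat, ('I_m -> 'M[C]_N) -> 'M[C]_N.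

Definition dsum (N K : nat) (X : 'I_m -> 'M[C]_N) (Z : 'I_m -> 'M[C]_K)
  : 'I_m -> 'M[C]_(N + K) := fun i => block_mx (X i) 0 0 (Z i).

Definition simil (N : nat) (S : 'M[C]_N) (X : 'I_m -> 'M[C]_N) : 'I_m -> 'M[C]_N :=
  fun i => invmx S *m X i *m S.

Definition ncfun (p : R) (f : ncmap) : Prop :=
  (forall N K (X : 'I_m -> 'M[C]_N) (Z : 'I_m -> 'M[C]_K),
      Upsilon p X -> Upsilon p Z -> Upsilon p (dsum X Z) ->
      f (N + K)%N (dsum X Z) = block_mx (f N X) 0 0 (f K Z)) /\
  (forall N (X : 'I_m -> 'M[C]_N) (S : 'M[C]_N),
      S \in unitmx -> Upsilon p X -> Upsilon p (simil S X) ->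
      f N (simil S X) = invmx S *m f N X *m S).

Definition coeffs (p : R) (c : seq 'I_m -> C) (f : ncmap) : Prop :=
  ell2 p c /\
  forall N (X : 'I_m -> 'M[C]_N), Upsilon p X ->
    psum (fun w => c w *: wpow X w) @ \oo --> f N X.

Definition H2 (p : R) (f : ncmap) : Prop :=
  ncfun p f /\ exists c, coeffs p c f.

(* K_p(X,Y) = sum_l sum_{|w|=l} p^l X^w (x) (Y^w)^*  in C^{NxN} (x) C^{MxM}
   (Kronecker product, C^{NxN} (x) C^{MxM} = C^{NM x NM}) *)
Definition Kp (p : R) (N M : nat) (X : 'I_m -> 'M[C]_N) (Y : 'I_m -> 'M[C]_M)
  : 'M[C]_(N * M) :=
  lim (psum (fun w => rC (p ^+ size w) *: (tensmx (wpow X w) (mxadj (wpow Y w)))) @ \oo).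

(* slice e1 e2 F := (I_N (x) e1^H) F (I_N (x) e2), i.e. e1^H F e2 (^H = conjugate transpose) *)
Definition slice (N M : nat) (e1 e2 : 'cV[C]_M) (F : 'M[C]_(N * M)) : 'M[C]_N :=
  castmx (muln1 N, muln1 N)
    (tensmx 1%:M (mxadj e1) *m F *m tensmx 1%:M e2).

End Defs.

(* Main.v *)
Require Import Defs.
From HB Require Import structures.
From mathcomp Require Import all_boot all_order all_algebra.
From mathcomp Require Import all_classical all_reals all_analysis.
From mathcomp Require Import complex mxtens.
From mathcomp Require Import lra ring.
Import Order.TTheory GRing.Theory Num.Theory.
Import numFieldNormedType.Exports.
Local Open Scope ring_scope.
Local Open Scope classical_set_scope.
Section CLemmas.
Variable R : realType.
Implicit Types (a b : R).

Lemma ncRe a b : `|a| <= Num.sqrt (a ^+ 2 + b ^+ 2).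
Proof. by rewrite -sqrtr_sqr ler_wsqrtr // lerDl sqr_ge0. Qed.

Lemma ncIm a b : `|b| <= Num.sqrt (a ^+ 2 + b ^+ 2).
Proof. by rewrite addrC ncRe. Qed.

Lemma ncle a b : Num.sqrt (a ^+ 2 + b ^+ 2) <= `|a| + `|b|.
Proof.
rewrite -[X in _ <= X]ger0_norm ?addr_ge0 // -sqrtr_sqr ler_wsqrtr //.
rewrite sqrrD -(real_normK (num_real a)) -(real_normK (num_real b)) lerD2r lerDl.
by rewrite mulrn_wge0 // mulr_ge0.
Qed.

Lemma normCE (z : R[i]) : `|z| = (Num.sqrt (complex.Re z ^+ 2 + complex.Im z ^+ 2))%:C%C.
Proof. exact: normc_def. Qed.

Lemma ReB (z w : R[i]) : complex.Re z - complex.Re w = complex.Re (z - w).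
Proof. by case: z; case: w. Qed.
Lemma ImB (z w : R[i]) : complex.Im z - complex.Im w = complex.Im (z - w).
Proof. by case: z; case: w. Qed.

Lemma cvg_Re (u : nat -> R[i]) (l : R[i]) :
  u @ \oo --> l -> (fun n => complex.Re (u n)) @ \oo --> complex.Re l.
Proof.
move=> /cvgrPdist_lt hu; apply/cvgrPdist_lt => e e0.
have e0' : (0 : R[i]) < e%:C%C by rewrite ltcR.
move: (hu _ e0'); apply: filterS => n.
rewrite normCE ltcR; apply: le_lt_trans.
by rewrite ReB; exact: ncRe.
Qed.

Lemma cvg_Im (u : nat -> R[i]) (l : R[i]) :
  u @ \oo --> l -> (fun n => complex.Im (u n)) @ \oo --> complex.Im l.
Proof.
move=> /cvgrPdist_lt hu; apply/cvgrPdist_lt => e e0.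
have e0' : (0 : R[i]) < e%:C%C by rewrite ltcR.
move: (hu _ e0'); apply: filterS => n.
rewrite normCE ltcR; apply: le_lt_trans.
by rewrite ImB; exact: ncIm.
Qed.

Lemma cvg_mkC (u v : nat -> R) x y :
  u @ \oo --> x -> v @ \oo --> y ->
  (fun n => Complex (u n) (v n)) @ \oo --> Complex x y.
Proof.
move=> /cvgrPdist_lt hu /cvgrPdist_lt hv; apply/cvgrPdist_lt => -[a b].
rewrite ltcE /= => /andP[/eqP b0 a0].
have -> : b = 0 by rewrite b0.
rewrite complexr0.
have e2 : 0 < a / 2 by rewrite divr_gt0.
move: (hu _ e2) (hv _ e2) => h1 h2.
near=> n.
rewrite normCE ltcR /=.
apply: (le_lt_trans (ncle _ _)).
rewrite [X in _ < X](splitr a) ltrD //.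
  by near: n.
by near: n.
Unshelve. all: by end_near.
Qed.

End CLemmas.
Arguments cvg_Re {R u l}.
Arguments cvg_Im {R u l}.
Arguments cvg_mkC {R u v x y}.
Section GL.
Variable R : realType.

Lemma sum_mkC n (f g : nat -> R) :
  \sum_(k < n) Complex (f k) (g k) = Complex (\sum_(k < n) f k) (\sum_(k < n) g k).
Proof.
elim: n => [|n IH]; first by rewrite !big_ord0.
by rewrite !big_ord_recr IH.
Qed.

Lemma mono_cvg (f : nat -> R) (B : R) : (forall k, 0 <= f k) ->
  (forall n, \sum_(k < n) f k <= B) ->
  exists l : R, (fun n => \sum_(k < n) f k) @ \oo --> l.
Proof.
move=> f0 hB.
pose s := fun n => \sum_(0 <= k < n) f k.
have hom : {homo s : n m / (n <= m)%N >-> n <= m}.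
  exact: (@nondecreasing_series _ f xpredT 0 (fun n _ _ => f0 n)).
have ub : has_ubound (range s).
  by exists B => _ [n _ <-]; rewrite /s big_mkord; exact: hB.
exists (sup (range s)).
have -> : (fun n => \sum_(k < n) f k) = s.
  by apply: funext => n; rewrite /s big_mkord.
exact: nondecreasing_cvgn hom ub.
Qed.

Lemma GL (u : nat -> R[i]) (B : R) :
  (forall n, \sum_(k < n) `|u k| <= B%:C%C) ->
  exists l : R[i], (fun n => \sum_(k < n) u k) @ \oo --> l.
Proof.
move=> hB.
pose nc k := Num.sqrt (complex.Re (u k) ^+ 2 + complex.Im (u k) ^+ 2).
have nc0 k : 0 <= nc k by exact: sqrtr_ge0.
have hB' n : \sum_(k < n) nc k <= B.
  rewrite -lecR; apply: le_trans (hB n); rewrite raddf_sum /=.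
  by rewrite le_eqVlt; apply/orP; left; apply/eqP/eq_bigr => k _; rewrite normCE.
have hRe1 k : `|complex.Re (u k)| <= nc k by exact: ncRe.
have hIm1 k : `|complex.Im (u k)| <= nc k by exact: ncIm.
have hRe k : 0 <= nc k + complex.Re (u k).
  by have := ler_norm (- complex.Re (u k)); rewrite normrN; have := hRe1 k; lra.
have hIm k : 0 <= nc k + complex.Im (u k).
  by have := ler_norm (- complex.Im (u k)); rewrite normrN; have := hIm1 k; lra.
have [lA hA] := @mono_cvg nc B nc0 hB'.
have [lP hP] : exists l : R, (fun n => \sum_(k < n) (nc k + complex.Re (u k))) @ \oo --> l.
  apply: (@mono_cvg _ (B + B) hRe) => n; rewrite big_split /=; apply: lerD; first exact: hB'.
  apply: le_trans (hB' n); apply: ler_sum => k _.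
  exact: le_trans (ler_norm _) (hRe1 k).
have [lQ hQ] : exists l : R, (fun n => \sum_(k < n) (nc k + complex.Im (u k))) @ \oo --> l.
  apply: (@mono_cvg _ (B + B) hIm) => n; rewrite big_split /=; apply: lerD; first exact: hB'.
  apply: le_trans (hB' n); apply: ler_sum => k _.
  exact: le_trans (ler_norm _) (hIm1 k).
exists (Complex (lP - lA) (lQ - lA)).
have -> : (fun n => \sum_(k < n) u k) = (fun n =>
   Complex (\sum_(k < n) (nc k + complex.Re (u k)) - \sum_(k < n) nc k)
           (\sum_(k < n) (nc k + complex.Im (u k)) - \sum_(k < n) nc k)).
  apply: funext => n.
  transitivity (\sum_(k < n) Complex (nc k + complex.Re (u k) - nc k)
                                     (nc k + complex.Im (u k) - nc k)).
    apply: eq_bigr => k _.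
    by rewrite !(addrC (nc k)) !addrK; case: (u k).
  by rewrite (sum_mkC n (fun k => nc k + complex.Re (u k) - nc k) (fun k => nc k + complex.Im (u k) - nc k)) !sumrB.
by apply: cvg_mkC; apply: cvgB.
Qed.

End GL.
Section MxCvg.
Variable R : realType.
Local Notation C := R[i].

Lemma cvg_mxE a b (u : nat -> 'M[C]_(a, b)) (A : 'M[C]_(a, b)) :
  (forall i j, (fun n => u n i j) @ \oo --> A i j) -> u @ \oo --> A.
Proof.
move=> h; apply/(@cvg_mx_entourageP _ a b (u @ \oo) _ A) => E entE.
apply: filter_forall => i; apply: filter_forall => j.
have := h i j; move/cvg_entourageP => /(_ E entE).
move=> H; near=> N; apply/mem_set; near: N; exact: H.
Unshelve. all: by end_near.
Qed.

Lemma cvg_mx_coord a b (u : nat -> 'M[C]_(a, b)) (A : 'M[C]_(a, b)) i j :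
  u @ \oo --> A -> (fun n => u n i j) @ \oo --> A i j.
Proof.
move=> h.
exact: (cvg_trans (cvg_app (fun M : 'M[C]_(a, b) => M i j) h) (@coord_continuous C a b i j A)).
Qed.

Lemma cvg_sumI (I : finType) (f : I -> nat -> C) (l : I -> C) :
  (forall i, f i @ \oo --> l i) ->
  (fun n => \sum_i f i n) @ \oo --> \sum_i l i.
Proof.
move=> h.
suff H : forall s : seq I,
    (fun n => \sum_(i <- s) f i n) @ \oo --> \sum_(i <- s) l i by exact: H.
elim => [|x s IH].
  rewrite big_nil; apply: cvg_near_cst; apply: nearW => n; by rewrite big_nil.
rewrite big_cons.
have -> : (fun n => \sum_(i <- x :: s) f i n) = (fun n => f x n + \sum_(i <- s) f i n).
  by apply: funext => n; rewrite big_cons.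
exact: (cvgD (h x) IH).
Qed.

Lemma cvg_mid a b c d (P : 'M[C]_(a, b)) (Q : 'M[C]_(c, d)) (u : nat -> 'M[C]_(b, c)) A :
  u @ \oo --> A -> (fun n => P *m u n *m Q) @ \oo --> P *m A *m Q.
Proof.
move=> h; apply: cvg_mxE => i j.
have E : forall M : 'M[C]_(b, c), (P *m M *m Q) i j = \sum_l (\sum_k P i k * M k l) * Q l j.
  by move=> M; rewrite mxE; apply: eq_bigr => l _; rewrite mxE.
rewrite (_ : (fun n => (P *m u n *m Q) i j) = (fun n => \sum_l (\sum_k P i k * u n k l) * Q l j)); last first.
  by apply: funext => n; exact: E.
rewrite E; apply: cvg_sumI => l; apply: cvgMl; apply: cvg_sumI => k; apply: cvgMr.
exact: cvg_mx_coord.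
Qed.

Lemma cvg_castmx a b a' b' (e : (a = a') * (b = b')) (u : nat -> 'M[C]_(a, b)) (A : 'M[C]_(a, b)) :
  u @ \oo --> A -> (fun n => castmx e (u n)) @ \oo --> castmx e A.
Proof.
move=> h; apply: cvg_mxE => i j.
rewrite castmxE.
rewrite (_ : (fun n => castmx e (u n) i j) = (fun n => u n (cast_ord (esym e.1) i) (cast_ord (esym e.2) j))); last first.
  by apply: funext => n; rewrite castmxE.
exact: cvg_mx_coord.
Qed.

Lemma mx_uniq a b (u : nat -> 'M[C]_(a, b)) (A B : 'M[C]_(a, b)) :
  u @ \oo --> A -> u @ \oo --> B -> A = B.
Proof. by move=> h1 h2; apply: (cvg_unique (@norm_hausdorff _ _) h1 h2). Qed.

Lemma C_uniq (u : nat -> C) (A B : C) :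
  u @ \oo --> A -> u @ \oo --> B -> A = B.
Proof. by move=> h1 h2; apply: (cvg_unique (@norm_hausdorff _ _) h1 h2). Qed.

End MxCvg.
Arguments cvg_mxE {R a b u A}.
Arguments cvg_sumI {R I f l}.
Arguments cvg_mid {R a b c d} P Q {u A}.
Arguments cvg_castmx {R a b a' b'} e {u A}.
Arguments mx_uniq {R a b u A B}.
Arguments C_uniq {R u A B}.
Arguments cvg_mx_coord {R a b u A} i j.
Section Alg.
Variables (R : realType) (m : nat).
Local Notation C := R[i].
Implicit Types (w : seq 'I_m).

Lemma mxadjE a b (A : 'M[C]_(a, b)) i j : mxadj A i j = (A j i)^*.
Proof. by rewrite !mxE. Qed.

Lemma mxadjM a b c (A : 'M[C]_(a, b)) (B : 'M[C]_(b, c)) :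
  mxadj (A *m B) = mxadj B *m mxadj A.
Proof. by rewrite /mxadj map_mxM trmx_mul. Qed.

Lemma mxadjK a b (A : 'M[C]_(a, b)) : mxadj (mxadj A) = A.
Proof. by apply/matrixP => i j; rewrite !mxE conjCK. Qed.

Lemma psum_entry a b (F : seq 'I_m -> 'M[C]_(a, b)) L i j :
  (psum F L) i j = psum (fun w => F w i j) L.
Proof.
rewrite /psum summxE; apply: eq_bigr => l _.
by rewrite /lsum summxE.
Qed.

Lemma psum_add (V : zmodType) (F G : seq 'I_m -> V) L :
  psum (fun w => F w + G w) L = psum F L + psum G L.
Proof.
rewrite /psum -big_split; apply: eq_bigr => l _.
by rewrite /lsum -big_split.
Qed.

Lemma psum_mid a b c d (P : 'M[C]_(a, b)) (Q : 'M[C]_(c, d)) (F : seq 'I_m -> 'M[C]_(b, c)) L :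
  P *m psum F L *m Q = psum (fun w => P *m F w *m Q) L.
Proof.
rewrite /psum mulmx_sumr mulmx_suml; apply: eq_bigr => l _.
by rewrite /lsum mulmx_sumr mulmx_suml.
Qed.

Lemma psum_mulr (F : seq 'I_m -> C) k L :
  psum (fun w => k * F w) L = k * psum F L.
Proof.
rewrite /psum mulr_sumr; apply: eq_bigr => l _.
by rewrite /lsum mulr_sumr.
Qed.

Lemma psum_sum (I : finType) (f : I -> seq 'I_m -> C) L :
  psum (fun w => \sum_i f i w) L = \sum_i psum (f i) L.
Proof.
rewrite /psum exchange_big; apply: eq_bigr => l _.
by rewrite /lsum exchange_big.
Qed.

Lemma castmx_sum a b a' b' (e : (a = a') * (b = b')) (I : Type) (r : seq I)
    (F : I -> 'M[C]_(a, b)) :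
  castmx e (\sum_(i <- r) F i) = \sum_(i <- r) castmx e (F i).
Proof.
apply/matrixP => i j; rewrite castmxE !summxE; apply: eq_bigr => k _.
by rewrite castmxE.
Qed.

Lemma castmxZ a b a' b' (e : (a = a') * (b = b')) k (A : 'M[C]_(a, b)) :
  castmx e (k *: A) = k *: castmx e A.
Proof. by apply/matrixP => i j; rewrite castmxE !mxE castmxE. Qed.

Lemma slice_psum N M (e1 e2 : 'cV[C]_M) (F : seq 'I_m -> 'M[C]_(N * M)) L :
  slice e1 e2 (psum F L) = psum (fun w => slice e1 e2 (F w)) L.
Proof.
by rewrite /slice psum_mid /psum castmx_sum; apply: eq_bigr => l _;
  rewrite /lsum castmx_sum.
Qed.

Lemma sliceZ N M (e1 e2 : 'cV[C]_M) k (F : 'M[C]_(N * M)) :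
  slice e1 e2 (k *: F) = k *: slice e1 e2 F.
Proof.
rewrite /slice -scalemxAr -scalemxAl.
exact: castmxZ.
Qed.

Lemma slice_tens N M (e1 e2 : 'cV[C]_M) (A : 'M[C]_N) (B : 'M[C]_M) :
  slice e1 e2 (tensmx A B) = (mxadj e1 *m B *m e2) 0 0 *: A.
Proof.
rewrite /slice !tensmx_mul mul1mx mulmx1.
have u2 : forall k : 'I_(N * 1), (mxtens_unindex k).2 = 0.
  by move=> k; apply: val_inj; rewrite /= modn1.
apply/matrixP => i j; rewrite castmxE !mxE mulrC !u2.
by congr (_ * A _ _); apply: val_inj; rewrite /= divn1.
Qed.

Lemma wpow_cons N (X : 'I_m -> 'M[C]_N) i w : wpow X (i :: w) = X i *m wpow X w.
Proof. by []. Qed.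
Lemma wpow_nil N (X : 'I_m -> 'M[C]_N) : wpow X [::] = 1%:M.
Proof. by []. Qed.

Lemma wpow_dsum N K (X : 'I_m -> 'M[C]_N) (Z : 'I_m -> 'M[C]_K) w :
  wpow (dsum X Z) w = block_mx (wpow X w) 0 0 (wpow Z w).
Proof.
elim: w => [|i w IH] /=; first by rewrite scalar_mx_block.
rewrite IH /dsum mulmx_block !mulmx0 !mul0mx !addr0 !add0r.
by [].
Qed.

Lemma wpow_simil N (S : 'M[C]_N) (X : 'I_m -> 'M[C]_N) w :
  S \in unitmx -> wpow (simil S X) w = invmx S *m wpow X w *m S.
Proof.
move=> uS; elim: w => [|i w IH]; first by rewrite !wpow_nil mulmx1 (mulVmx uS).
by rewrite !wpow_cons IH /simil -!mulmxA (mulmxA S (invmx S)) (mulmxV uS) mul1mx.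
Qed.

Lemma blkE N K (A : 'M[C]_N) (B : 'M[C]_K) :
  block_mx A 0 0 B = col_mx 1%:M 0 *m A *m row_mx 1%:M 0
                     + col_mx 0 1%:M *m B *m row_mx 0 1%:M.
Proof.
rewrite -!mulmxA !mul_mx_row !mul_col_mx !mulmx1 !mulmx0 !mul1mx !mul0mx.
by rewrite add_row_mx !add_col_mx !addr0 !add0r block_mxEh.
Qed.

End Alg.
Section Kern.
Variables (R : realType) (m : nat) (p : R).
Hypothesis hp : 0 < p.
Local Notation C := R[i].

Definition UpsT N (X : 'I_m -> 'M[C]_N) :=
  fun w : seq 'I_m => rC (p ^+ size w) *: (mxadj (wpow X w) *m wpow X w).

Definition cK M (e1 e2 : 'cV[C]_M) (Y : 'I_m -> 'M[C]_M) (w : seq 'I_m) :=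
  rC (p ^+ size w) * (mxadj e1 *m mxadj (wpow Y w) *m e2) 0 0.

Arguments UpsT {N}.
Arguments cK {M}.

Lemma rC_ge0 k : (0 : C) <= rC (p ^+ k).
Proof. by rewrite /rC complexr0 ler0c exprn_ge0 // ltW. Qed.

Lemma rC_conj (x : R) : (rC x)^* = rC x.
Proof. change (conjc (rC x) = rC x). by rewrite /rC /= oppr0. Qed.

Lemma rCM (a b : R) : rC a * rC b = rC (a * b).
Proof. by rewrite /rC !complexr0 rmorphM. Qed.

Lemma UpsT_diag N (X : 'I_m -> 'M[C]_N) w b :
  UpsT X w b b = rC (p ^+ size w) * \sum_k ((wpow X w k b)^* * wpow X w k b).
Proof. by rewrite /UpsT !mxE; congr (_ * _); apply: eq_bigr => k _; rewrite !mxE. Qed.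

Lemma UpsT_ge0 N (X : 'I_m -> 'M[C]_N) w b : 0 <= UpsT X w b b.
Proof.
rewrite UpsT_diag mulr_ge0 ?rC_ge0 // sumr_ge0 // => k _.
by rewrite mulrC mul_conjC_ge0.
Qed.

Lemma UpsT_ge N (X : 'I_m -> 'M[C]_N) w a b :
  rC (p ^+ size w) * `|wpow X w a b| ^+ 2 <= UpsT X w b b.
Proof.
rewrite UpsT_diag ler_wpM2l ?rC_ge0 // (bigD1 a) //= normCK mulrC lerDl.
by rewrite sumr_ge0 // => k _; rewrite mulrC mul_conjC_ge0.
Qed.

Lemma ge0_realC (z : C) : 0 <= z -> z = (complex.Re z)%:C%C.
Proof. by move=> /ger0_Im; case: z => a b /= ->. Qed.

Lemma Re_sum n (f : nat -> C) :
  complex.Re (\sum_(k < n) f k) = \sum_(k < n) complex.Re (f k).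
Proof.
elim: n => [|n IH]; first by rewrite !big_ord0.
rewrite !big_ord_recr -IH.
by case: (\sum_(k < n) f k) => ? ?; case: (f n).
Qed.

Lemma ups_bound N (X : 'I_m -> 'M[C]_N) (S : 'M[C]_N) b :
  psum (UpsT X) @ \oo --> S ->
  forall n, (psum (UpsT X) n) b b <= (complex.Re (S b b))%:C%C.
Proof.
move=> hS n.
pose v k := complex.Re (lsum k (fun w => UpsT X w b b)).
have v0 k : 0 <= v k.
  have : 0 <= lsum k (fun w => UpsT X w b b).
    by apply: sumr_ge0 => w _; exact: UpsT_ge0.
  by rewrite lecE => /andP[_].
have eq k : (psum (UpsT X) k) b b = (\sum_(l < k) v l)%:C%C.
  rewrite psum_entry.
  have ge : 0 <= psum (fun w => UpsT X w b b) k.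
    by apply: sumr_ge0 => l _; apply: sumr_ge0 => w _; exact: UpsT_ge0.
  by rewrite (ge0_realC _ ge) /psum (Re_sum k (fun l => lsum l (fun w => UpsT X w b b))).
have hom : {homo (fun k => \sum_(0 <= l < k) v l) : n m / (n <= m)%N >-> n <= m}.
  exact: (@nondecreasing_series _ v xpredT 0 (fun n _ _ => v0 n)).
have cv : (fun k => \sum_(0 <= l < k) v l) @ \oo --> complex.Re (S b b).
  have := cvg_Re (cvg_mx_coord b b hS).
  rewrite (_ : (fun n => complex.Re (psum (UpsT X) n b b)) = (fun k => \sum_(0 <= l < k) v l)) //.
  by apply: funext => k; rewrite eq big_mkord.
have cvn : cvgn (fun k => \sum_(0 <= l < k) v l).
  by apply/cvg_ex; exists (complex.Re (S b b)).
have := nondecreasing_cvgn_le hom cvn n.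
by rewrite (cvg_lim (@Rhausdorff R) cv) eq lecR big_mkord.
Qed.

Lemma nprod_le (s t : C) : 0 <= s -> 0 <= t -> s * t <= s ^+ 2 + t ^+ 2.
Proof.
move=> hs ht; case/orP: (ger_leVge hs ht) => h.
  apply: (le_trans (ler_wpM2r ht h)).
  by rewrite -expr2 lerDr exprn_ge0.
apply: (le_trans (ler_wpM2l hs h)).
by rewrite -expr2 lerDl exprn_ge0.
Qed.

Lemma Ent N M (X : 'I_m -> 'M[C]_N) (Y : 'I_m -> 'M[C]_M) a1 b1 a2 b2 :
  Upsilon p X -> Upsilon p Y ->
  exists l : C, psum (fun w => rC (p ^+ size w) * (wpow X w a1 b1 * (wpow Y w a2 b2)^*)) @ \oo --> l.
Proof.
move=> [SX hX] [SY hY].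
pose F := fun w : seq 'I_m => rC (p ^+ size w) * (wpow X w a1 b1 * (wpow Y w a2 b2)^*).
have := @GL R (fun l => lsum l F) (complex.Re (SX b1 b1) + complex.Re (SY b2 b2)).
apply => n.
apply: (@le_trans _ _ (\sum_(k < n) lsum k (fun w => UpsT X w b1 b1 + UpsT Y w b2 b2))).
  apply: ler_sum => k _; apply: le_trans (ler_norm_sum _ _ _) _.
  apply: ler_sum => w _.
  rewrite /F normrM (ger0_norm (rC_ge0 _)) normrM norm_conjC.
  apply: (@le_trans _ _ (rC (p ^+ size w) * (`|wpow X w a1 b1| ^+ 2 + `|wpow Y w a2 b2| ^+ 2))).
    by rewrite ler_wpM2l ?rC_ge0 // nprod_le.
  by rewrite mulrDr lerD // UpsT_ge.
rewrite (_ : \sum_(k < n) _ = psum (fun w => UpsT X w b1 b1 + UpsT Y w b2 b2) n) //.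
rewrite psum_add -!psum_entry rmorphD lerD //.
  exact: ups_bound hX n.
exact: ups_bound hY n.
Qed.

Lemma Kp_cvg N M (X : 'I_m -> 'M[C]_N) (Y : 'I_m -> 'M[C]_M) :
  Upsilon p X -> Upsilon p Y ->
  psum (fun w => rC (p ^+ size w) *: tensmx (wpow X w) (mxadj (wpow Y w))) @ \oo --> Kp p X Y.
Proof.
move=> hX hY.
set T := psum _.
suff [L hL] : exists L : 'M[C]_(N * M), T @ \oo --> L.
  by rewrite /Kp -/T (cvg_lim (@norm_hausdorff _ _) hL).
pose ent (i j : 'I_(N * M)) := fun w : seq 'I_m => rC (p ^+ size w) *
  (wpow X w (mxtens_unindex i).1 (mxtens_unindex j).1 *
   (wpow Y w (mxtens_unindex j).2 (mxtens_unindex i).2)^*).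
exists (\matrix_(i, j) lim (psum (ent i j) @ \oo)).
apply: cvg_mxE => i j; rewrite mxE.
have [l hl] := @Ent N M X Y (mxtens_unindex i).1 (mxtens_unindex j).1
  (mxtens_unindex j).2 (mxtens_unindex i).2 hX hY.
rewrite (_ : (fun n => T n i j) = psum (ent i j)); last first.
  apply: funext => n; rewrite /T psum_entry; congr psum; apply: funext => w.
  by rewrite !mxE.
by rewrite (cvg_lim (@norm_hausdorff _ _) hl).
Qed.

Lemma sliceKp_cvg N M (X : 'I_m -> 'M[C]_N) (Y : 'I_m -> 'M[C]_M) (e1 e2 : 'cV[C]_M) :
  Upsilon p X -> Upsilon p Y ->
  psum (fun w => cK e1 e2 Y w *: wpow X w) @ \oo --> slice e1 e2 (Kp p X Y).
Proof.
move=> hX hY.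
have h := cvg_castmx (muln1 N, muln1 N)
  (cvg_mid (tensmx (1%:M : 'M[C]_N) (mxadj e1)) (tensmx (1%:M : 'M[C]_N) e2) (@Kp_cvg N M X Y hX hY)).
set T := (fun w => rC (p ^+ size w) *: tensmx (wpow X w) (mxadj (wpow Y w))) in h.
have E n : slice e1 e2 (psum T n) = psum (fun w => cK e1 e2 Y w *: wpow X w) n.
  rewrite slice_psum; congr psum; apply: funext => w.
  by rewrite /T sliceZ slice_tens scalerA.
rewrite (_ : psum (fun w => cK e1 e2 Y w *: wpow X w) = fun n => slice e1 e2 (psum T n)).
  exact: h.
by apply: funext => n; rewrite E.
Qed.

End Kern.
Section Word.
Variables (R : realType) (m : nat).
Local Notation C := R[i].

Definition wmx (u : seq 'I_m) (i : 'I_m) : 'M[C]_((size u).+1) :=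
  \matrix_(a, b) (((b : nat) == a.+1) && (nth i u a == i))%:R.

Lemma sum_ord_eq n k : \sum_(c < n) (((c : nat) == k)%:R : C) = ((k < n)%N)%:R.
Proof.
case: (ltnP k n) => h.
  rewrite (bigD1 (Ordinal h)) //= eqxx big1 ?addr0 // => c hc.
  by rewrite (_ : ((c : nat) == k) = false) //; apply/negbTE; apply: contra hc => /eqP e;
    apply/eqP/val_inj.
rewrite big1 // => c _; rewrite (_ : ((c : nat) == k) = false) //.
by apply/negbTE; rewrite neq_ltn (leq_trans (ltn_ord c) h).
Qed.

Lemma wmx_pow u w (a b : 'I_((size u).+1)) :
  wpow (wmx u) w a b =
  (((b : nat) == (a + size w)%N) && (take (size w) (drop a u) == w))%:R.
Proof.
elim: w a b => [|i w IH] a b.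
  by rewrite wpow_nil mxE addn0 take0 eqxx andbT eq_sym.
rewrite wpow_cons mxE.
pose K := ((nth i u a == i) && ((b : nat) == (a.+1 + size w)%N)
           && (take (size w) (drop a.+1 u) == w)).
transitivity (\sum_(c < (size u).+1) ((((c : nat) == a.+1)%:R : C) * K%:R)).
  apply: eq_bigr => c _; rewrite mxE IH.
  case: eqP => [e|_]; last by rewrite !mul0r.
  rewrite e /K mul1r -natrM mulnb.
  by case: (nth i u a == i) => //=; rewrite andbT.
rewrite -mulr_suml sum_ord_eq -natrM mulnb /K.
case: (ltnP a (size u)) => ha /=.
  rewrite (drop_nth i ha) /= eqseq_cons addnS addSn.
  by rewrite ltnS ha /= -andbA andbCA.
rewrite addnS -addSn (_ : ((b : nat) == (a.+1 + size w)%N) = false) ?andbF ?andFb //.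
apply/negbTE; rewrite neq_ltn; apply/orP; left.
by apply: leq_trans (ltn_ord b) _; rewrite addSn ltnS (leq_trans ha) // leq_addr.
Qed.

Lemma wmx_big u w : (size u < size w)%N -> wpow (wmx u) w = 0.
Proof.
move=> h; apply/matrixP => a b; rewrite wmx_pow mxE.
rewrite (_ : ((b : nat) == (a + size w)%N) = false) //.
apply/negbTE; rewrite neq_ltn; apply/orP; left.
by apply: leq_trans (ltn_ord b) _; apply: leq_trans h (leq_addl _ _).
Qed.

Lemma wmx_corner u w :
  wpow (wmx u) w ord0 ord_max = (w == u)%:R.
Proof.
rewrite wmx_pow /= add0n drop0.
case: (eqVneq (size w) (size u)) => h.
  by rewrite /= h take_size eq_sym.
rewrite /= (_ : (w == u) = false) //; apply/negbTE; apply: contra_neq h => ->.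
by [].
Qed.

Lemma psum_S (V : zmodType) (F : seq 'I_m -> V) n :
  psum F n.+1 = psum F n + lsum n F.
Proof. by rewrite /psum big_ord_recr. Qed.

Lemma lsum0 (V : zmodType) (F : seq 'I_m -> V) n :
  (forall w, size w = n -> F w = 0) -> lsum n F = 0.
Proof. by move=> h; apply: big1 => t _; apply: h; rewrite size_tuple. Qed.

Lemma psum_eventual (V : zmodType) (F : seq 'I_m -> V) K :
  (forall w, (K < size w)%N -> F w = 0) -> forall n, (K < n)%N -> psum F n = psum F K.+1.
Proof.
move=> h; elim => // n IH; rewrite ltnS leq_eqVlt => /orP[/eqP -> // | hlt].
rewrite psum_S IH // (@lsum0 V F n) ?addr0 // => w hw.
by apply: h; rewrite hw.
Qed.

Lemma psum_event_cvg a b (F : seq 'I_m -> 'M[C]_(a, b)) K :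
  (forall w, (K < size w)%N -> F w = 0) -> psum F @ \oo --> psum F K.+1.
Proof.
move=> h; apply: cvg_near_cst.
exists K.+1 => // n /= hn; apply: psum_eventual => //.
Qed.

Lemma wmx_corner_psum u (c : seq 'I_m -> C) :
  (psum (fun w => c w *: wpow (wmx u) w) (size u).+1) ord0 ord_max = c u.
Proof.
rewrite psum_entry.
rewrite (_ : (fun w => (c w *: wpow (wmx u) w) ord0 ord_max) = fun w => c w * (w == u)%:R); last first.
  by apply: funext => w; rewrite mxE wmx_corner.
rewrite psum_S.
rewrite (_ : psum _ (size u) = 0); last first.
  apply: big1 => l _; apply: lsum0 => w hw.
  rewrite (_ : (w == u) = false) ?mulr0 //; apply/negbTE; apply/eqP => e.
  by move: (ltn_ord l); rewrite -hw e ltnn.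
rewrite add0r /lsum (bigD1 (in_tuple u)) //= eqxx mulr1 big1 ?addr0 // => t ht.
rewrite (_ : (tval t == u) = false) ?mulr0 //; apply/negbTE.
by apply: contra ht => /eqP e; apply/eqP/val_inj.
Qed.

End Word.
Section Main.
Variables (R : realType) (m : nat) (p : R).
Hypothesis hp : 0 < p.
Local Notation C := R[i].
Local Notation cKm := (@cK R m p _).

Lemma wmx_ups (u : seq 'I_m) : Upsilon p (@wmx R m u).
Proof.
exists (psum (fun w => rC (p ^+ size w) *: (mxadj (wpow (@wmx R m u) w) *m wpow (@wmx R m u) w)) (size u).+1).
apply: psum_event_cvg => w hw.
by rewrite wmx_big // mulmx0 scaler0.
Qed.

Lemma coef_eq M (Y : 'I_m -> 'M[C]_M) (hY : Upsilon p Y) (e1 e2 : 'cV[C]_M) c :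
  coeffs p c (fun N (X : 'I_m -> 'M[C]_N) => slice e1 e2 (Kp p X Y)) ->
  forall u, c u = cKm e1 e2 Y u.
Proof.
move=> [_ hc] u.
have hX := wmx_ups u.
have h1 := hc _ _ hX.
have h2 := @sliceKp_cvg R m p hp _ _ _ Y e1 e2 hX hY.
have h1' : psum (fun w => c w *: wpow (@wmx R m u) w) @ \oo -->
           psum (fun w => c w *: wpow (@wmx R m u) w) (size u).+1.
  by apply: psum_event_cvg => w hw; rewrite wmx_big // scaler0.
have h2' : psum (fun w => cKm e1 e2 Y w *: wpow (@wmx R m u) w) @ \oo -->
           psum (fun w => cKm e1 e2 Y w *: wpow (@wmx R m u) w) (size u).+1.
  by apply: psum_event_cvg => w hw; rewrite wmx_big // scaler0.
have E1 := mx_uniq h1 h1'.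
have E2 := mx_uniq h2 h2'.
have := congr1 (fun A : 'M[C]_((size u).+1) => A ord0 ord_max) (etrans (esym E1) E2).
by rewrite /= !wmx_corner_psum.
Qed.

Lemma pinv (w : seq 'I_m) : rC (p ^- size w) * rC (p ^+ size w) = 1.
Proof.
rewrite rCM mulVf; first by [].
by rewrite expf_neq0 // lt0r_neq0.
Qed.

Lemma conjM (x y : C) : (x * y)^* = x^* * y^*.
Proof. exact: rmorphM. Qed.

Lemma conj_sum (I : finType) (F : I -> C) : (\sum_i F i)^* = \sum_i (F i)^*.
Proof. exact: rmorph_sum. Qed.

Lemma s_expand M (W : 'M[C]_M) (e1 e2 : 'cV[C]_M) :
  (mxadj e1 *m mxadj W *m e2) 0 0 =
  \sum_(x : 'I_M * 'I_M) ((e1 x.2 0)^* * e2 x.1 0) * (W x.1 x.2)^*.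
Proof.
rewrite mxE.
under eq_bigr => j _ do rewrite mxE mulr_suml.
rewrite pair_bigA; apply: eq_bigr => x _.
by rewrite !mxE mulrAC.
Qed.

Lemma aux (a r S T : C) : a * r = 1 -> a * (r * S * (r * T)) = r * (S * T).
Proof. by move=> h; rewrite -[RHS]mul1r -h; ring. Qed.

Lemma ell2_cK M (Y : 'I_m -> 'M[C]_M) (hY : Upsilon p Y) (e1 e2 : 'cV[C]_M) :
  ell2 p (cKm e1 e2 Y).
Proof.
pose b (x : 'I_M * 'I_M) := (e1 x.2 0)^* * e2 x.1 0.
pose ent (x y : 'I_M * 'I_M) := fun w : seq 'I_m =>
  rC (p ^+ size w) * (wpow Y w y.1 y.2 * (wpow Y w x.1 x.2)^*).
have E : (fun w => rC (p ^- size w) * `|cKm e1 e2 Y w| ^+ 2) =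
         (fun w => \sum_x \sum_y (b x * (b y)^*) * ent x y w).
  apply: funext => w.
  have hs : (mxadj e1 *m mxadj (wpow Y w) *m e2) 0 0 = \sum_x b x * (wpow Y w x.1 x.2)^*.
    exact: s_expand.
  have hsc : ((mxadj e1 *m mxadj (wpow Y w) *m e2) 0 0)^* =
             \sum_y (b y)^* * wpow Y w y.1 y.2.
    by rewrite hs conj_sum; apply: eq_bigr => y _; rewrite conjM conjCK.
  rewrite normCK /cK conjM rC_conj hsc hs (aux _ _ _ _ (pinv w)).
  rewrite mulr_suml mulr_sumr; apply: eq_bigr => x _.
  rewrite mulr_sumr mulr_sumr; apply: eq_bigr => y _.
  by rewrite /ent /b; ring.
exists (\sum_x \sum_y (b x * (b y)^*) * lim (psum (ent x y) @ \oo)).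
rewrite E.
rewrite (_ : psum _ = fun n => \sum_x \sum_y (b x * (b y)^*) * psum (ent x y) n); last first.
  apply: funext => n; rewrite psum_sum; apply: eq_bigr => x _.
  by rewrite psum_sum; apply: eq_bigr => y _; rewrite psum_mulr.
apply: cvg_sumI => x; apply: cvg_sumI => y; apply: cvgMr.
have [l hl] := @Ent R m p hp M M Y Y y.1 y.2 x.1 x.2 hY hY.
by rewrite (cvg_lim (@norm_hausdorff _ _) hl).
Qed.

End Main.
Theorem proposition3p14 (R : realType) (m : nat) (p : R) (M : nat)
    (Y : 'I_m -> 'M[R[i]]_M) :
  0 < p -> (0 < M)%N -> Upsilon p Y ->
  (* (i) *)
  (forall e1 e2 : 'cV[R[i]]_M,
     H2 p (fun N (X : 'I_m -> 'M[R[i]]_N) => slice e1 e2 (Kp p X Y))) /\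
  (* (ii) *)
  (forall (e1 e2 : 'cV[R[i]]_M) (f : ncmap R m)
          (cf cK : seq 'I_m -> R[i]),
     H2 p f -> coeffs p cf f ->
     coeffs p cK (fun N (X : 'I_m -> 'M[R[i]]_N) => slice e1 e2 (Kp p X Y)) ->
     ip_to p cf cK ((mxadj e2 *m f M Y *m e1) 0 0)).
Proof.
move=> hp _ hY; split.
  move=> e1 e2; split; last first.
    exists (@cK R m p M e1 e2 Y); split; first exact: ell2_cK.
    by move=> N X hX; exact: (@sliceKp_cvg R m p hp _ _ X Y e1 e2 hX hY).
  split.
    move=> N K X Z hX hZ hXZ.
    have hs := @sliceKp_cvg R m p hp _ _ (dsum X Z) Y e1 e2 hXZ hY.
    have hx := @sliceKp_cvg R m p hp _ _ X Y e1 e2 hX hY.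
    have hz := @sliceKp_cvg R m p hp _ _ Z Y e1 e2 hZ hY.
    apply: (mx_uniq hs).
    rewrite (_ : psum (fun w => @cK R m p M e1 e2 Y w *: wpow (dsum X Z) w) =
      fun n => col_mx 1%:M 0 *m psum (fun w => @cK R m p M e1 e2 Y w *: wpow X w) n *m row_mx 1%:M 0
             + col_mx 0 1%:M *m psum (fun w => @cK R m p M e1 e2 Y w *: wpow Z w) n *m row_mx 0 1%:M).
      rewrite blkE; apply: cvgD; apply: cvg_mid; [exact: hx | exact: hz].
    apply: funext => n; rewrite !psum_mid -psum_add; congr psum; apply: funext => w.
    by rewrite wpow_dsum scale_block_mx !scaler0 blkE.
  move=> N X S hS hX hSX.
  have hs := @sliceKp_cvg R m p hp _ _ (simil S X) Y e1 e2 hSX hY.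
  have hx := @sliceKp_cvg R m p hp _ _ X Y e1 e2 hX hY.
  apply: (mx_uniq hs).
  rewrite (_ : psum (fun w => @cK R m p M e1 e2 Y w *: wpow (simil S X) w) =
      fun n => invmx S *m psum (fun w => @cK R m p M e1 e2 Y w *: wpow X w) n *m S).
    exact: cvg_mid hx.
  apply: funext => n; rewrite psum_mid; congr psum; apply: funext => w.
  by rewrite (@wpow_simil R m N S X w hS) scalemxAl scalemxAr.
move=> e1 e2 f cf cK' _ hcf hcK.
have E := @coef_eq R m p hp M Y hY e1 e2 cK' hcK.
rewrite /ip_to.
rewrite (_ : (fun w => rC (p ^- size w) * cf w * (cK' w)^*) =
             fun w => (mxadj e2 *m (cf w *: wpow Y w) *m e1) 0 0); last first.
  apply: funext => w.
  rewrite E /cK conjM rC_conj.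
  have -> : ((mxadj e1 *m mxadj (wpow Y w) *m e2) 0 0)^* = (mxadj e2 *m wpow Y w *m e1) 0 0.
    by rewrite -mxadjE !mxadjM !mxadjK mulmxA.
  rewrite -scalemxAr -scalemxAl [in RHS]mxE.
  have h := @pinv R m p hp w.
  by rewrite -[RHS]mul1r -h; ring.
rewrite (_ : psum (fun w => (mxadj e2 *m (cf w *: wpow Y w) *m e1) 0 0) =
             fun n => (mxadj e2 *m psum (fun w => cf w *: wpow Y w) n *m e1) 0 0); last first.
  by apply: funext => n; rewrite psum_mid psum_entry.
apply: cvg_mx_coord; apply: cvg_mid.
by case: hcf => _ h; exact: h.
Qed.
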